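(* The set $\mathcal N$ is exactly the set of all words over $A$ of the form $x^{i_n}y^{\epsilon_n}\cdots x^{i_1}y^{\epsilon_1}x^{i_0}$ such that $n\ge 0$, each $\epsilon_j\in\{\pm1\}$, each $i_j\in\mathbb Z$, and for every $j\in\{1,\dots,n-1\}$: (1) if $i_j=0$ then $\epsilon_j=\epsilon_{j+1}$; (2) if $\epsilon_j=1$ then $i_j\le 0$; (3) if $\epsilon_j=-1$ then $i_j\le 1$.
   Context: Let $A=\{x^{\pm1},y^{\pm1}\}$ (generators of Thompson's group $F$, $x=x_0$, $y=x_1$). Guba and Sapir's rewriting system $\Sigma$ consists of the rules $aa^{-1}\to\emptyset$ for $a\in A$, $y^\epsilon x^iy\to x^iyx^{-i-1}y^\epsilon x^{i+1}$ and $y^\epsilon x^{i+1}y^{-1}\to x^{i+1}y^{-1}x^{-i}y^\epsilon x^i$ for $\epsilon\in\{1,-1\}$, $i\ge1$. $\mathcal N$ is the set of words over $A$ irreducible with respect to $\Sigma$, i.e. words containing no subword $aa^{-1}$, $y^\epsilon x^iy$, or $y^\epsilon x^{i+1}y^{-1}$ ($\epsilon=\pm1$, $i\ge1$). *)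

(* Defs.v *)
From mathcomp Require Import all_boot all_order all_algebra.
Set Implicit Arguments. Unset Strict Implicit. Unset Printing Implicit Defensive.
Import Order.TTheory GRing.Theory Num.Theory.

(* Letters of A = {x, x^-1, y, y^-1}; x = x_0, y = x_1. *)
Inductive letter := X | Xi | Y | Yi.
Definition word := seq letter.

Definition inv_letter (a : letter) : letter :=
  match a with X => Xi | Xi => X | Y => Yi | Yi => Y end.

Definition xpow (i : int) : word :=
  match i with Posz n => nseq n X | Negz n => nseq n.+1 Xi end.

(* y^eps, with eps = true meaning eps = 1 and eps = false meaning eps = -1 *)
Definition ypow (e : bool) : word := if e then [:: Y] else [:: Yi].

(* The rewriting system Sigma of Guba and Sapir: rule l r means l -> r. *)
Inductive rule : word -> word -> Prop :=
  | rule_free (a : letter) : rule [:: a; inv_letter a] [::]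
  | rule_pos (e : bool) (i : nat) : (1 <= i)%N ->
      rule (ypow e ++ xpow (Posz i) ++ [:: Y])
           (xpow (Posz i) ++ [:: Y] ++ xpow (- (Posz i.+1))%R ++ ypow e
              ++ xpow (Posz i.+1))
  | rule_neg (e : bool) (i : nat) : (1 <= i)%N ->
      rule (ypow e ++ xpow (Posz i.+1) ++ [:: Yi])
           (xpow (Posz i.+1) ++ [:: Yi] ++ xpow (- (Posz i))%R ++ ypow e
              ++ xpow (Posz i)).

Definition irreducible (w : word) : Prop :=
  ~ exists (u v l r : word), rule l r /\ w = u ++ l ++ v.

Definition N_set (w : word) : Prop := irreducible w.

Fixpoint nf_word (n : nat) (ep : nat -> bool) (ex : nat -> int) : word :=
  match n with
  | 0 => xpow (ex 0%N)
  | k.+1 => xpow (ex k.+1) ++ ypow (ep k.+1) ++ nf_word k ep ex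
  end.

(* Main.v *)
Require Import Defs.
From mathcomp Require Import all_boot all_order all_algebra.
From mathcomp Require Import zify.
From HB Require Import structures.
Import Order.TTheory GRing.Theory Num.Theory.
Local Open Scope ring_scope.

Definition letter_eqb (a b : letter) : bool :=
  match a, b with
  | X, X | Xi, Xi | Y, Y | Yi, Yi => true
  | _, _ => false end.
Lemma letter_eqP : Equality.axiom letter_eqb.
Proof. by case; case; constructor. Qed.
HB.instance Definition _ := hasDecEq.Build letter letter_eqP.

Definition startsbad (s : word) : Prop :=
  exists l r v, rule l r /\ s = l ++ v.

Lemma irr_nil : irreducible [::].
Proof.
move=> [u [v [l [r [H E]]]]].
by case: H E => [a|e i _|e i _]; case: u => //; case: e.
Qed.

Lemma irr_cons a w : irreducible (a :: w) <-> ~ startsbad (a :: w) /\ irreducible w.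
Proof.
split.
- move=> H; split.
  + move=> [l [r [v [R E]]]]; apply: H; by exists [::], v, l, r.
  + move=> [u [v [l [r [R E]]]]]; apply: H; exists (a :: u), v, l, r; by rewrite E.
- move=> [H1 H2] [u [v [l [r [R E]]]]].
  case: u E => [|b u] /= E.
  + by apply: H1; exists l, r, v.
  + case: E => _ E; apply: H2; by exists u, v, l, r.
Qed.

Definition ycons (e : bool) := if e then Y else Yi.
Lemma ypowE e : ypow e = [:: ycons e]. Proof. by case: e. Qed.

Lemma Y_notin_xpow i : (Y \in xpow i) = false.
Proof. by case: i => m; rewrite /xpow mem_nseq andbF. Qed.
Lemma Yi_notin_xpow i : (Yi \in xpow i) = false.
Proof. by case: i => m; rewrite /xpow mem_nseq andbF. Qed.

Lemma sb_x a s : (a = X \/ a = Xi) -> startsbad (a :: s) ->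
  exists t, s = inv_letter a :: t.
Proof.
move=> Ha [l [r [v [R E]]]].
case: R E => [b|e i _|e i _] /= E.
- case: E => -> ->; by exists v.
- by case: e E; case: Ha => -> .
- by case: e E; case: Ha => -> .
Qed.

Lemma nseqX_eq m m' c d t t' :
  nseq m X ++ c :: t = nseq m' X ++ d :: t' -> c <> X -> d <> X -> m = m' /\ c = d.
Proof.
move=> + Hc Hd; elim: m m' => [|m IH] [|m'] //=.
- by case=> ->.
- by case=> E; rewrite E in Hc.
- by case=> E; rewrite -E in Hd.
- by case=> /IH [-> ->].
Qed.
Lemma sb_y e i e' r : startsbad (ypow e ++ xpow i ++ ypow e' ++ r) ->
  (i = 0 /\ e' = ~~ e) \/ (e' = true /\ 1 <= i) \/ (e' = false /\ 2 <= i).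
Proof.
move=> [l [rr [v [R E]]]].
case: R E => [b|e0 m Hm|e0 m Hm] E.
- rewrite ypowE /= in E; case: E => <-.
  case: i => [[|m]|m] /=.
  + by rewrite ypowE /=; case=> H _; left; split => //; case: e e' H => [] [].
  + by case: e.
  + by case: e.
- rewrite !ypowE -!catA /= in E; case: E => _.
  case: i => [m'|m'] /=.
  + move=> /nseqX_eq [||E1 E2]; first by case: (e').
    by [].
    right; left; split; first by case: (e') E2.
    by rewrite E1 lez_nat.
  + by case: m Hm.
- rewrite !ypowE -!catA /= in E; case: E => _.
  case: i => [m'|m'] /=.
  + move=> E; have [||E1 E2] := @nseqX_eq m' m.+1 _ _ _ _ E; first by case: (e').
    by [].
    right; right; split; first by case: (e') E2.
    by rewrite E1 lez_nat.
  + by [].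
Qed.

Lemma sb_y_end e i : ~ startsbad (ypow e ++ xpow i).
Proof.
move=> [l [rr [v [R E]]]].
case: R E => [b|e0 m Hm|e0 m Hm] E.
- rewrite ypowE /= in E; case: E => <- E.
  have : inv_letter (ycons e) \in xpow i by rewrite E mem_head.
  clear E; by case: e; rewrite /= ?Y_notin_xpow ?Yi_notin_xpow.
- rewrite !ypowE -!catA /= in E; case: E => _ E.
  have : Y \in xpow i by rewrite E; elim: (m) => [|k IH] /=; rewrite ?in_cons ?IH ?orbT.
  by rewrite Y_notin_xpow.
- rewrite !ypowE -!catA /= in E; case: E => _ E.
  have : Yi \in xpow i by rewrite E; elim: (m) => [|k IH] /=; rewrite ?in_cons ?IH ?orbT.
  by rewrite Yi_notin_xpow.
Qed.

Lemma sb_y_conv e i e' r :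
  (i = 0 /\ e' = ~~ e) \/ (e' = true /\ 1 <= i) \/ (e' = false /\ 2 <= i) ->
  startsbad (ypow e ++ xpow i ++ ypow e' ++ r).
Proof.
case=> [[-> ->]|[[-> H]|[-> H]]].
- exists [:: ycons e; ycons (~~ e)], [::], r; split; last by rewrite !ypowE.
  by case: e; [exact: (rule_free Y)|exact: (rule_free Yi)].
- case: i H => [m|m] // H; rewrite lez_nat in H.
  exists (ypow e ++ xpow (Posz m) ++ [:: Y]), (xpow (Posz m) ++ [:: Y] ++ xpow (- (Posz m.+1))%R ++ ypow e
              ++ xpow (Posz m.+1)), r; split; first exact: rule_pos.
  by rewrite -!catA.
- case: i H => [[|m]|m] // H; rewrite lez_nat in H.
  exists (ypow e ++ xpow (Posz m.+1) ++ [:: Yi]), (xpow (Posz m.+1) ++ [:: Yi] ++ xpow (- (Posz m))%R ++ ypow e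
              ++ xpow (Posz m)), r; split; first exact: rule_neg.
  by rewrite -!catA.
Qed.

Lemma irr_nseq a k s : (a = X \/ a = Xi) -> irreducible s ->
  (forall t, s <> inv_letter a :: t) -> irreducible (nseq k a ++ s).
Proof.
move=> Ha Hs Hh; elim: k => [|k IH] //=.
apply/irr_cons; split => // /(sb_x _ _ Ha) [t Et].
case: k Et {IH} => [|k] /= Et; first exact: (Hh t).
by case: Et; case: Ha => ->.
Qed.

Lemma irr_xpow i s : irreducible s -> (forall t, s <> X :: t) -> (forall t, s <> Xi :: t) ->
  irreducible (xpow i ++ s).
Proof.
move=> Hs H1 H2; case: i => m; rewrite /xpow; apply: irr_nseq => //; by [left|right].
Qed.

Lemma nf_word_ext n ep ex ep' ex' :
  (forall j, (j <= n)%N -> ep j = ep' j /\ ex j = ex' j) -> nf_word n ep ex = nf_word n ep' ex'.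
Proof.
elim: n => [|n IH] H /=; first by have [_ ->] := H 0%N isT.
have [-> ->] := H n.+1 (leqnn _); rewrite IH // => j Hj; apply: H; exact: leqW.
Qed.

Lemma nf_split n ep ex : nf_word n ep ex = xpow (ex n) ++
  (match n with 0%N => [::] | k.+1 => ypow (ep k.+1) ++ nf_word k ep ex end).
Proof. by case: n => [|n] //=; rewrite cats0. Qed.

Definition cond n (ep : nat -> bool) (ex : nat -> int) :=
    (forall j : nat, (0 < j)%N -> (j < n)%N ->
       [/\ ex j = 0 -> ep j = ep j.+1,
           ep j = true -> ex j <= 0
         & ep j = false -> ex j <= 1]).

Lemma nf_irr n ep ex : cond n ep ex -> irreducible (nf_word n ep ex).
Proof.
elim: n => [|n IH] C /=.
- by rewrite -[xpow _]cats0; apply: irr_xpow => //; exact: irr_nil.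
- apply: irr_xpow; last 2 first.
  + by rewrite ypowE; case: (ep n.+1).
  + by rewrite ypowE; case: (ep n.+1).
  rewrite ypowE /=; apply/irr_cons; split; last first.
    apply: IH => j H1 H2; apply: C => //; exact: ltnW.
  have -> : ycons (ep n.+1) :: nf_word n ep ex = ypow (ep n.+1) ++ nf_word n ep ex by rewrite ypowE.
  rewrite nf_split.
  case: n C {IH} => [|n] C.
    by rewrite cats0; apply: sb_y_end.
  move/sb_y; have [C1 C2 C3] := C n.+1 isT (leqnn _).
  case=> [[H1 H2]|[[H1 H2]|[H1 H2]]].
  + by move: (C1 H1); rewrite H2; case: (ep n.+2).
  + by move: (C2 H1); rewrite leNgt (lt_le_trans _ H2).
  + by move: (C3 H1); rewrite leNgt (lt_le_trans _ H2).
Qed.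

Definition tailw n (ep : nat -> bool) (ex : nat -> int) :=
  match n with 0%N => [::] | k.+1 => ypow (ep k.+1) ++ nf_word k ep ex end.

Lemma nf_upd n ep ex i :
  nf_word n ep (fun j => if j == n then i else ex j) = xpow i ++ tailw n ep ex.
Proof.
rewrite nf_split eqxx; case: n => [|k] //=; congr (_ ++ (_ ++ _)).
apply: nf_word_ext => j Hj; split => //.
by have -> : (j == k.+1) = false by apply/negbTE; rewrite neq_ltn ltnS Hj.
Qed.

Lemma nf_updY n ep ex e :
  nf_word n.+1 (fun j => if j == n.+1 then e else ep j) (fun j => if j == n.+1 then 0 else ex j)
  = ypow e ++ nf_word n ep ex.
Proof.
rewrite /= !eqxx /=; congr (_ ++ _).
apply: nf_word_ext => j Hj.
by have -> : (j == n.+1) = false by apply/negbTE; rewrite neq_ltn ltnS Hj.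
Qed.

Lemma cond_upd n ep ex i : cond n ep ex -> cond n ep (fun j => if j == n then i else ex j).
Proof.
move=> C j H1 H2; have := C j H1 H2.
by have -> : (j == n) = false by apply/negbTE; rewrite neq_ltn H2.
Qed.

Lemma nf_X n ep ex : 0 <= ex n ->
  nf_word n ep (fun j => if j == n then ex n + 1 else ex j) = X :: nf_word n ep ex.
Proof.
move=> H; rewrite nf_upd [in RHS]nf_split.
case: (ex n) H => [m|m] // _.
by rewrite -PoszD addn1.
Qed.

Lemma nf_Xi n ep ex : ex n <= 0 ->
  nf_word n ep (fun j => if j == n then ex n - 1 else ex j) = Xi :: nf_word n ep ex.
Proof.
move=> H; rewrite nf_upd [in RHS]nf_split.
case: (ex n) H => [[|m]|m] // _.
have -> : Negz m - 1 = Negz m.+1 by rewrite !NegzE; lia.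
by [].
Qed.

Lemma irr_nf w : irreducible w -> exists n ep ex, w = nf_word n ep ex /\ cond n ep ex.
Proof.
elim: w => [|a w IH] H.
  by exists 0%N, (fun _ => true), (fun _ => 0).
have [Hsb Hw] := (irr_cons a w).1 H.
have [n [ep [ex [E C]]]] := IH Hw.
have Ew : w = xpow (ex n) ++ tailw n ep ex by rewrite E nf_split.
case: a H Hsb => H Hsb.
- have Hge : 0 <= ex n.
    case Hn: (ex n) => [m|m] //; exfalso; apply: Hsb.
    exists [:: X; Xi], [::], (nseq m Xi ++ tailw n ep ex).
    split; first exact: (rule_free X).
    by rewrite Ew Hn.
  exists n, ep, (fun j => if j == n then ex n + 1 else ex j); split.
  + by rewrite nf_X // -E.
  + exact: cond_upd.
- have Hle : ex n <= 0.
    case Hn: (ex n) => [[|m]|m] //; exfalso; apply: Hsb.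
    exists [:: Xi; X], [::], (nseq m X ++ tailw n ep ex).
    split; first exact: (rule_free Xi).
    by rewrite Ew Hn.
  exists n, ep, (fun j => if j == n then ex n - 1 else ex j); split.
  + by rewrite nf_Xi // -E.
  + exact: cond_upd.
- exists n.+1, (fun j => if j == n.+1 then true else ep j), (fun j => if j == n.+1 then 0 else ex j).
  split; first by rewrite nf_updY -E.
  move=> j H1 H2; rewrite ltnS leq_eqVlt in H2.
  have -> : (j == n.+1) = false by apply/negbTE/eqP; case/orP: H2 => [/eqP|] ?; lia.
  case/orP: H2 => [/eqP Ej|H2].
  + subst j; rewrite eqxx.
    case: n H1 C E Ew Hsb => [//|k] _ C E Ew Hsb.
    have Hsb' : ~ startsbad (ypow true ++ xpow (ex k.+1) ++ ypow (ep k.+1) ++ nf_word k ep ex).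
      by move=> Hc; apply: Hsb; rewrite Ew; exact: Hc.
    split.
    * move=> H0; case Hep: (ep k.+1) => //; exfalso; apply: Hsb'; apply: sb_y_conv; left; by rewrite H0 Hep.
    * move=> Hep; rewrite leNgt; apply/negP => Hlt; apply: Hsb'; apply: sb_y_conv; right; left; by rewrite Hep.
    * move=> Hep; rewrite leNgt; apply/negP => Hlt; apply: Hsb'; apply: sb_y_conv; right; right; by rewrite Hep.
  + have -> : (j.+1 == n.+1) = false by apply/negbTE; rewrite neq_ltn ltnS H2.
    exact: C.
- exists n.+1, (fun j => if j == n.+1 then false else ep j), (fun j => if j == n.+1 then 0 else ex j).
  split; first by rewrite nf_updY -E.
  move=> j H1 H2; rewrite ltnS leq_eqVlt in H2.
  have -> : (j == n.+1) = false by apply/negbTE/eqP; case/orP: H2 => [/eqP|] ?; lia.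
  case/orP: H2 => [/eqP Ej|H2].
  + subst j; rewrite eqxx.
    case: n H1 C E Ew Hsb => [//|k] _ C E Ew Hsb.
    have Hsb' : ~ startsbad (ypow false ++ xpow (ex k.+1) ++ ypow (ep k.+1) ++ nf_word k ep ex).
      by move=> Hc; apply: Hsb; rewrite Ew; exact: Hc.
    split.
    * move=> H0; case Hep: (ep k.+1) => //; exfalso; apply: Hsb'; apply: sb_y_conv; left; by rewrite H0 Hep.
    * move=> Hep; rewrite leNgt; apply/negP => Hlt; apply: Hsb'; apply: sb_y_conv; right; left; by rewrite Hep.
    * move=> Hep; rewrite leNgt; apply/negP => Hlt; apply: Hsb'; apply: sb_y_conv; right; right; by rewrite Hep.
  + have -> : (j.+1 == n.+1) = false by apply/negbTE; rewrite neq_ltn ltnS H2.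
    exact: C.
Qed.

Theorem lemma2p2 (w : word) :
  N_set w <->
  exists (n : nat) (ep : nat -> bool) (ex : nat -> int),
    w = nf_word n ep ex /\
    (forall j : nat, (0 < j)%N -> (j < n)%N ->
       [/\ ex j = 0 -> ep j = ep j.+1,
           ep j = true -> ex j <= 0
         & ep j = false -> ex j <= 1]).
Proof.
split; first exact: irr_nf.
by move=> [n [ep [ex [-> C]]]]; apply: nf_irr.
Qed.
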